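(* Let $\ket{\phi}=w_0\ket{000}+w_1\ket{001}+w_2\ket{010}+w_3\ket{011}+w_4\ket{100}+w_5\ket{101}+w_6\ket{110}+w_7\ket{111}$ be a real 3-qubit state, i.e. $w_0,\dots,w_7\in\mathbb{R}$ with $\sum_i w_i^2=1$. Then there is a quantum circuit consisting of real local gates and at most four controlled-$Z$ gates that maps $\ket{\phi}$ to $\ket{000}$ (equivalently, whose inverse prepares $\ket{\phi}$ from $\ket{000}$). Moreover, if $$\Delta(\ket{\phi})=(w_0 w_7-w_1 w_6-w_2 w_5+w_3 w_4)^2-4 (w_1 w_2-w_0 w_3) (w_5 w_6-w_4 w_7)\ge 0,$$ then such a circuit exists using real local gates and at most three controlled-$Z$ gates.
   Context: A real local gate on three qubits is an operator $U_2\otimes U_1\otimes U_0$ where each $U_i$ is a $2\times 2$ real orthogonal matrix acting on one qubit. The two-qubit controlled-$Z$ gate is $cz=\mathrm{diag}(1,1,1,-1)$ in the basis $\ket{00},\ket{01},\ket{10},\ket{11}$; on three qubits (labelled $0,1,2$ from right to left, so in $\ket{q_2q_1q_0}$ qubit $0$ is the rightmost), $cz_{ij}$ denotes the controlled-$Z$ gate acting on qubits $i$ and $j$, i.e. it multiplies a basis state $\ket{q_2q_1q_0}$ by $-1$ exactly when $q_i=q_j=1$ and fixes it otherwise. A circuit is a finite composition of such gates. *)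

(* Defs.v *)
From HB Require Import structures.
From mathcomp Require Import all_boot all_order all_algebra.
From mathcomp Require Import reals.
Set Implicit Arguments. Unset Strict Implicit. Unset Printing Implicit Defensive.
Import Order.TTheory GRing.Theory Num.Theory.
Local Open Scope ring_scope.

(* Basis index k : 'I_8 encodes |q2 q1 q0> with k = 4 q2 + 2 q1 + q0.
   qbit i k = value (0/1) of qubit i in basis state k. *)
Definition qbit (i : 'I_3) (k : 'I_8) : 'I_2 := inord (odd (k %/ 2 ^ i)).

Section Gates.
Variable R : realType.

Definition orthogonal2 (U : 'M[R]_2) : Prop := U^T *m U = 1%:M.

(* U2 (x) U1 (x) U0, qubit 0 the rightmost tensor factor. *)
Definition local_mx (U2 U1 U0 : 'M[R]_2) : 'M[R]_8 :=
  \matrix_(a < 8, b < 8)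
    (U2 (qbit 2 a) (qbit 2 b) * U1 (qbit 1 a) (qbit 1 b) * U0 (qbit 0 a) (qbit 0 b)).

Definition cz_mx (i j : 'I_3) : 'M[R]_8 :=
  \matrix_(a < 8, b < 8)
    (if a == b then (if (odd (a %/ 2 ^ i)) && (odd (a %/ 2 ^ j)) then -1 else 1)
     else 0).

Inductive gate : Type :=
  | GLocal of 'M[R]_2 & 'M[R]_2 & 'M[R]_2
  | GCZ of 'I_3 & 'I_3.

Definition gate_ok (g : gate) : Prop :=
  match g with
  | GLocal U2 U1 U0 => [/\ orthogonal2 U2, orthogonal2 U1 & orthogonal2 U0]
  | GCZ i j => i != j
  end.

Definition gate_mx (g : gate) : 'M[R]_8 :=
  match g with
  | GLocal U2 U1 U0 => local_mx U2 U1 U0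
  | GCZ i j => cz_mx i j
  end.

Definition is_cz (g : gate) : bool := if g is GCZ _ _ then true else false.

(* A circuit is a list of gates; the head of the list is applied first. *)
Definition circuit_mx (c : seq gate) : 'M[R]_8 :=
  foldl (fun acc g => gate_mx g *m acc) 1%:M c.

Definition circuit_ok (c : seq gate) : Prop := foldr (fun g P => gate_ok g /\ P) True c.

Definition num_cz (c : seq gate) : nat := count is_cz c.

Definition amp (phi : 'cV[R]_8) (k : nat) : R := phi (inord k) 0.

Definition ket000 : 'cV[R]_8 := \col_(a < 8) (if a == ord0 then 1 else 0).

Definition Delta (phi : 'cV[R]_8) : R :=
  let w := amp phi in
  (w 0%N * w 7%N - w 1%N * w 6%N - w 2%N * w 5%N + w 3%N * w 4%N) ^+ 2
  - 4 * (w 1%N * w 2%N - w 0%N * w 3%N) * (w 5%N * w 6%N - w 4%N * w 7%N).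

End Gates.
Arguments ket000 {R}.

(* Main.v *)
Require Import Defs.
From HB Require Import structures.
From mathcomp Require Import all_boot all_order all_algebra.
From mathcomp Require Import reals.
From mathcomp Require Import ring lra.
Import Order.TTheory GRing.Theory Num.Theory.
Local Open Scope ring_scope.
Set Implicit Arguments. Unset Strict Implicit. Unset Printing Implicit Defensive.

Section Alg.
Variable R : realType.
Implicit Types x y : R.

Lemma sq_sqrt x y : Num.sqrt (x^+2 + y^+2) ^+ 2 = x^+2 + y^+2 :> R.
Proof. by rewrite sqr_sqrtr // addr_ge0 // sqr_ge0. Qed.

Lemma sqrt_nz x y : Num.sqrt (x^+2 + y^+2) = 0 -> x = 0 /\ y = 0 :> R.
Proof.
move=> h; have : x^+2 + y^+2 = 0 by rewrite -sq_sqrt h expr0n.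
move/eqP; rewrite paddr_eq0 ?sqr_ge0 // !sqrf_eq0 => /andP[/eqP -> /eqP ->]; by [].
Qed.

Lemma unit_div x y (r : R) : r != 0 -> r ^+ 2 = x^+2 + y^+2 -> (x / r)^+2 + (y / r)^+2 = 1.
Proof.
move=> hr h; have -> : (x / r)^+2 + (y / r)^+2 = (x^+2 + y^+2) / r^+2 by field.
by rewrite -h divff // expf_neq0.
Qed.

Lemma align x y : exists c s : R, [/\ c^+2 + s^+2 = 1, c*x + s*y = Num.sqrt (x^+2 + y^+2) & -s*x + c*y = 0].
Proof.
set r := Num.sqrt _; have r2 : r ^+ 2 = x^+2 + y^+2 by exact: sq_sqrt.
case: (eqVneq r 0) => hr.
  have [-> ->] := sqrt_nz hr; exists 1, 0; rewrite hr; split; ring.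
exists (x / r), (y / r); split; first exact: unit_div.
  have -> : x / r * x + y / r * y = (x^+2 + y^+2) / r by field.
  by rewrite -r2 expr2 mulrK // unitfE.
by field.
Qed.

Definition cross (g1 g2 f1 f2 : R) := g1 * f2 - g2 * f1.
Definition E (c s v1 v2 f1 f2 : R) :=
  cross ((c^+2 - s^+2)*v1 + 2*c*s*v2) (2*c*s*v1 + (s^+2 - c^+2)*v2) f1 f2.

Lemma E_gen d1 d2 v1 v2 f1 f2 (r : R) : r != 0 -> r ^+ 2 = d1^+2 + d2^+2 ->
  E (d1 / r) (d2 / r) v1 v2 f1 f2 =
  (2 * (v1*d1 + v2*d2) * cross d1 d2 f1 f2 - (d1^+2 + d2^+2) * cross v1 v2 f1 f2) / r^+2.
Proof. by move=> hr _; rewrite /E /cross; field. Qed.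

Lemma reflector v1 v2 f1 f2 : f1^+2 + f2^+2 = 1 ->
  exists c s : R, c^+2 + s^+2 = 1 /\ E c s v1 v2 f1 f2 = 0.
Proof.
move=> hf; set n := Num.sqrt (v1^+2 + v2^+2).
have n2 : n ^+ 2 = v1^+2 + v2^+2 by exact: sq_sqrt.
case: (boolP ((v1 + n*f1 == 0) && (v2 + n*f2 == 0))) => [/andP[/eqP h1 /eqP h2]|hd].
  exists f1, f2; split => //.
  have -> : E f1 f2 v1 v2 f1 f2 = - (f1^+2 + f2^+2) * cross (v1 + n*f1) (v2 + n*f2) f1 f2
    by rewrite /E /cross; ring.
  by rewrite h1 h2 /cross; ring.
set d1 := v1 + n*f1; set d2 := v2 + n*f2.
set r := Num.sqrt (d1^+2 + d2^+2).
have r2 : r ^+ 2 = d1^+2 + d2^+2 by exact: sq_sqrt.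
have hr : r != 0.
  apply/eqP => /sqrt_nz [h1 h2]; move: hd; by rewrite -/d1 -/d2 h1 h2 eqxx.
exists (d1 / r), (d2 / r); split; first exact: unit_div.
rewrite (E_gen _ _ _ _ hr r2).
have -> : 2 * (v1*d1 + v2*d2) * cross d1 d2 f1 f2 - (d1^+2 + d2^+2) * cross v1 v2 f1 f2
  = cross v1 v2 f1 f2 * ((v1^+2 + v2^+2) - n^+2 * (f1^+2 + f2^+2))
  by rewrite /d1 /d2 /cross; ring.
by rewrite hf n2; rewrite mulr1 subrr mulr0 mul0r.
Qed.

Lemma stepA a0 a1 a2 a3 a4 a5 a6 a7 :
  0 <= (a0 * a7 - a1 * a6 - a2 * a5 + a3 * a4) ^+ 2
       - 4 * (a1 * a2 - a0 * a3) * (a5 * a6 - a4 * a7) ->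
  exists c s : R, c^+2 + s^+2 = 1 /\
    (c*a0 + s*a4) * (c*a3 + s*a7) - (c*a1 + s*a5) * (c*a2 + s*a6) = 0.
Proof.
set b := (a0 * a7 - a1 * a6 - a2 * a5 + a3 * a4).
set dA := a0*a3 - a1*a2; set dB := a4*a7 - a5*a6.
move=> hD0.
have hD : 0 <= b^+2 - 4*dA*dB.
  by move: hD0; have -> : 4 * (a1 * a2 - a0 * a3) * (a5 * a6 - a4 * a7) = 4 * dA * dB by rewrite /dA /dB; ring.
suff [c [s [h1 h2]]] : exists c s : R, c^+2 + s^+2 = 1 /\ c^+2 * dA + c*s*b + s^+2 * dB = 0.
  by exists c, s; split => //; rewrite -h2 /dA /dB /b; ring.
case: (eqVneq dA 0) => hA.
  exists 1, 0; rewrite hA; split; ring.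
set x := - b + Num.sqrt (b^+2 - 4*dA*dB); set y := 2 * dA.
set r := Num.sqrt (x^+2 + y^+2).
have r2 : r ^+ 2 = x^+2 + y^+2 by exact: sq_sqrt.
have hr : r != 0.
  apply/eqP => /sqrt_nz [_ h]; move: hA; rewrite -[dA](@mulKf _ 2) ?pnatr_eq0 // -/y h mulr0 eqxx //.
exists (x / r), (y / r); split; first exact: unit_div.
have -> : (x / r) ^+ 2 * dA + x / r * (y / r) * b + (y / r) ^+ 2 * dB
  = (x^+2 * dA + x * y * b + y^+2 * dB) / r^+2 by field.
have hs : Num.sqrt (b^+2 - 4*dA*dB) ^+ 2 = b^+2 - 4*dA*dB by rewrite sqr_sqrtr.
have -> : x^+2 * dA + x * y * b + y^+2 * dB =
   dA * (Num.sqrt (b^+2 - 4*dA*dB) ^+ 2 - (b^+2 - 4*dA*dB)) by rewrite /x /y; ring.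
by rewrite hs subrr mulr0 mul0r.
Qed.

Lemma stepB u0 u1 u2 u3 : u0 * u3 - u1 * u2 = 0 ->
  exists c s : R, [/\ c^+2 + s^+2 = 1, -s*u0 + c*u2 = 0 & -s*u1 + c*u3 = 0].
Proof.
move=> hd.
case: (boolP ((u0 == 0) && (u2 == 0))) => [/andP[/eqP h0 /eqP h2]|hn].
  have [c [s [h1 _ h3]]] := align u1 u3; exists c, s; rewrite h0 h2; split => //; ring.
set r := Num.sqrt (u0^+2 + u2^+2).
have r2 : r ^+ 2 = u0^+2 + u2^+2 by exact: sq_sqrt.
have hr : r != 0.
  apply/eqP => /sqrt_nz [h1 h2]; move: hn; by rewrite h1 h2 eqxx.
exists (u0 / r), (u2 / r); split; first exact: unit_div.
  by field.
have -> : - (u2 / r) * u1 + u0 / r * u3 = (u0 * u3 - u1 * u2) / r by field.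
by rewrite hd mul0r.
Qed.

End Alg.

Section S.
Variable R : realType.

Definition mk8 (a0 a1 a2 a3 a4 a5 a6 a7 : R) : 'cV[R]_8 :=
  \col_(i < 8) nth 0 [:: a0; a1; a2; a3; a4; a5; a6; a7] i.

Definition mx2 (a b c d : R) : 'M[R]_2 :=
  \matrix_(i < 2, j < 2) if (i : nat) == 0%N then (if (j : nat) == 0%N then a else b)
                         else (if (j : nat) == 0%N then c else d).

Lemma sum8 (F : 'I_8 -> R) : \sum_(k < 8) F k =
  F (inord 0) + F (inord 1) + F (inord 2) + F (inord 3) + F (inord 4) + F (inord 5) + F (inord 6) + F (inord 7).
Proof.
rewrite !big_ord_recr big_ord0 /= add0r.
by congr (_ + _ + _ + _ + _ + _ + _ + _); congr F; apply/val_inj; rewrite /= inordK.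
Qed.

Lemma qbitE (i : 'I_3) k : (k < 8)%N -> qbit i (inord k) = inord (odd (k %/ 2 ^ i)).
Proof. by move=> hk; rewrite /qbit inordK. Qed.

Lemma mx2E a b c d (i j : nat) : (i < 2)%N -> (j < 2)%N ->
  mx2 a b c d (inord i) (inord j) = if i == 0%N then (if j == 0%N then a else b) else (if j == 0%N then c else d).
Proof. by move=> hi hj; rewrite mxE !inordK. Qed.

Lemma id2E (i j : nat) : (i < 2)%N -> (j < 2)%N ->
  (1%:M : 'M[R]_2) (inord i) (inord j) = (i == j)%:R.
Proof. by move=> hi hj; rewrite mxE -(inj_eq val_inj) /= !inordK. Qed.

Lemma mk8E a0 a1 a2 a3 a4 a5 a6 a7 k : (k < 8)%N ->
  mk8 a0 a1 a2 a3 a4 a5 a6 a7 (inord k) 0 = nth 0 [:: a0; a1; a2; a3; a4; a5; a6; a7] k.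
Proof. by move=> hk; rewrite mxE inordK. Qed.

Lemma inord_eqE n i j : (i <= n)%N -> (j <= n)%N -> ((inord i : 'I_n.+1) == inord j) = (i == j).
Proof. by move=> hi hj; rewrite -(inj_eq val_inj) /= !inordK. Qed.

Lemma ord8 (i : 'I_8) : i = inord i.
Proof. by apply/val_inj; rewrite /= inordK. Qed.

Lemma G2E a b c d x0 x1 x2 x3 x4 x5 x6 x7 :
  local_mx (mx2 a b c d) 1%:M 1%:M *m mk8 x0 x1 x2 x3 x4 x5 x6 x7 =
  mk8 (a*x0 + b*x4) (a*x1+b*x5) (a*x2+b*x6) (a*x3+b*x7) (c*x0+d*x4) (c*x1+d*x5) (c*x2+d*x6) (c*x3+d*x7).
Proof.
apply/matrixP => i j; rewrite ord1 (ord8 i) !mxE sum8.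
case: i => [[|[|[|[|[|[|[|[|//]]]]]]]] Hi] /=;
rewrite !mxE !qbitE //= !inord_eqE //= !inordK //=; ring.

Qed.
Lemma G1E a b c d x0 x1 x2 x3 x4 x5 x6 x7 :
  local_mx 1%:M (mx2 a b c d) 1%:M *m mk8 x0 x1 x2 x3 x4 x5 x6 x7 =
  mk8 (a*x0 + b*x2) (a*x1+b*x3) (c*x0+d*x2) (c*x1+d*x3) (a*x4+b*x6) (a*x5+b*x7) (c*x4+d*x6) (c*x5+d*x7).
Proof.
apply/matrixP => i j; rewrite ord1 (ord8 i) !mxE sum8.
case: i => [[|[|[|[|[|[|[|[|//]]]]]]]] Hi] /=;
rewrite !mxE !qbitE //= !inord_eqE //= !inordK //=; ring.

Qed.
Lemma G0E a b c d x0 x1 x2 x3 x4 x5 x6 x7 :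
  local_mx 1%:M 1%:M (mx2 a b c d) *m mk8 x0 x1 x2 x3 x4 x5 x6 x7 =
  mk8 (a*x0 + b*x1) (c*x0+d*x1) (a*x2+b*x3) (c*x2+d*x3) (a*x4+b*x5) (c*x4+d*x5) (a*x6+b*x7) (c*x6+d*x7).
Proof.
apply/matrixP => i j; rewrite ord1 (ord8 i) !mxE sum8.
case: i => [[|[|[|[|[|[|[|[|//]]]]]]]] Hi] /=;
rewrite !mxE !qbitE //= !inord_eqE //= !inordK //=; ring.

Qed.

Lemma czE (i j : nat) x0 x1 x2 x3 x4 x5 x6 x7 : (i < 3)%N -> (j < 3)%N ->
  cz_mx R (inord i) (inord j) *m mk8 x0 x1 x2 x3 x4 x5 x6 x7 =
  \col_(k < 8) ((if odd (k %/ 2 ^ i) && odd (k %/ 2 ^ j) then -1 else 1) *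
                nth 0 [:: x0; x1; x2; x3; x4; x5; x6; x7] k).
Proof.
move=> hi hj; apply/matrixP => k l; rewrite ord1 (ord8 k) !mxE sum8.
case: k => [[|[|[|[|[|[|[|[|//]]]]]]]] Hk] /=;
rewrite !mxE !inord_eqE //= !inordK //=; ring.
Qed.

Lemma cz01E x0 x1 x2 x3 x4 x5 x6 x7 :
  cz_mx R (inord 0) (inord 1) *m mk8 x0 x1 x2 x3 x4 x5 x6 x7 = mk8 x0 x1 x2 (-x3) x4 x5 x6 (-x7).
Proof.
rewrite czE //; apply/matrixP => k l; rewrite ord1 (ord8 k) !mxE.
case: k => [[|[|[|[|[|[|[|[|//]]]]]]]] Hk] /=; rewrite !inordK //=; ring.
Qed.
Lemma cz02E x0 x1 x2 x3 x4 x5 x6 x7 :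
  cz_mx R (inord 0) (inord 2) *m mk8 x0 x1 x2 x3 x4 x5 x6 x7 = mk8 x0 x1 x2 x3 x4 (-x5) x6 (-x7).
Proof.
rewrite czE //; apply/matrixP => k l; rewrite ord1 (ord8 k) !mxE.
case: k => [[|[|[|[|[|[|[|[|//]]]]]]]] Hk] /=; rewrite !inordK //=; ring.
Qed.
Lemma cz12E x0 x1 x2 x3 x4 x5 x6 x7 :
  cz_mx R (inord 1) (inord 2) *m mk8 x0 x1 x2 x3 x4 x5 x6 x7 = mk8 x0 x1 x2 x3 x4 x5 (-x6) (-x7).
Proof.
rewrite czE //; apply/matrixP => k l; rewrite ord1 (ord8 k) !mxE.
case: k => [[|[|[|[|[|[|[|[|//]]]]]]]] Hk] /=; rewrite !inordK //=; ring.
Qed.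
End S.


Section M.
Variable R : realType.

Definition nrm (v : 'cV[R]_8) := \sum_(k < 8) v k 0 ^+ 2.

Definition reach (k : nat) (v w : 'cV[R]_8) :=
  nrm w = nrm v /\ exists c : seq (gate R),
    circuit_ok c /\ (num_cz c <= k)%N /\ circuit_mx c *m v = w.

Lemma foldl_mx (c : seq (gate R)) (A : 'M[R]_8) :
  foldl (fun acc g => gate_mx g *m acc) A c = circuit_mx c *m A.
Proof.
elim: c A => [|g c IH] A /=; first by rewrite /circuit_mx /= mul1mx.
by rewrite /circuit_mx /= !IH mulmx1 mulmxA.
Qed.

Lemma circuit_cat (c1 c2 : seq (gate R)) :
  circuit_mx (c1 ++ c2) = circuit_mx c2 *m circuit_mx c1.
Proof. by rewrite {1}/circuit_mx foldl_cat foldl_mx. Qed.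

Lemma circuit_ok_cat (c1 c2 : seq (gate R)) :
  circuit_ok c1 -> circuit_ok c2 -> circuit_ok (c1 ++ c2).
Proof. by elim: c1 => [|g c IH] //= [h1 h2] h3; split => //; apply: IH. Qed.

Lemma reach_trans k1 k2 u v w : reach k1 u v -> reach k2 v w -> reach (k1 + k2) u w.
Proof.
move=> [n1 [c1 [o1 [k1c e1]]]] [n2 [c2 [o2 [k2c e2]]]]; split; first by rewrite n2 n1.
exists (c1 ++ c2); split; first exact: circuit_ok_cat.
split; first by rewrite /num_cz count_cat leq_add.
by rewrite circuit_cat -mulmxA e1 e2.
Qed.

Lemma reach_eq k u v w : reach k u v -> v = w -> reach k u w.
Proof. by move=> h <-. Qed.

Lemma reach_gate (g : gate R) v : gate_ok g -> nrm (gate_mx g *m v) = nrm v ->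
  reach (is_cz g) v (gate_mx g *m v).
Proof.
move=> ok hn; split => //; exists [:: g]; split => //; split; first by rewrite /num_cz /= addn0.
by rewrite /circuit_mx /= mulmx1.
Qed.

Lemma nrm_mk8 x0 x1 x2 x3 x4 x5 x6 x7 :
  nrm (mk8 x0 x1 x2 x3 x4 x5 x6 x7) =
  x0^+2 + x1^+2 + x2^+2 + x3^+2 + x4^+2 + x5^+2 + x6^+2 + x7^+2.
Proof. by rewrite /nrm sum8 !mk8E. Qed.

Lemma sum2 (F : 'I_2 -> R) : \sum_(k < 2) F k = F (inord 0) + F (inord 1).
Proof.
rewrite !big_ord_recr big_ord0 /= add0r.
by congr (_ + _); congr F; apply/val_inj; rewrite /= inordK.
Qed.

Lemma ord2 (i : 'I_2) : i = inord i.
Proof. by apply/val_inj; rewrite /= inordK. Qed.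

Ltac rs h := first [ring | (rewrite -[RHS]mul1r -h; ring)].

Lemma orth_rot (c s : R) : c^+2 + s^+2 = 1 -> orthogonal2 (mx2 c s (-s) c).
Proof.
move=> h; rewrite /orthogonal2; apply/matrixP => i j.
rewrite (ord2 i) (ord2 j) !mxE sum2 !mxE.
case: i j => [[|[|//]] Hi] [[|[|//]] Hj]; rewrite !inordK //=;
  rewrite inord_eqE //= ?mulr1n ?mulr0n; first [ring | (rewrite -h; ring)].
Qed.

Lemma orth1 : orthogonal2 (1%:M : 'M[R]_2).
Proof. by rewrite /orthogonal2 trmx1 mulmx1. Qed.

Lemma reach_R2 c s x0 x1 x2 x3 x4 x5 x6 x7 : c^+2 + s^+2 = 1 ->
  reach 0 (mk8 x0 x1 x2 x3 x4 x5 x6 x7)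
   (mk8 (c*x0 + s*x4) (c*x1+s*x5) (c*x2+s*x6) (c*x3+s*x7) (-s*x0+c*x4) (-s*x1+c*x5) (-s*x2+c*x6) (-s*x3+c*x7)).
Proof.
move=> h; rewrite -G2E; apply: (@reach_gate (GLocal (mx2 c s (-s) c) 1%:M 1%:M)).
  by split; [exact: orth_rot|exact: orth1|exact: orth1].
rewrite /= G2E !nrm_mk8.
transitivity ((c^+2 + s^+2) * (x0^+2 + x1^+2 + x2^+2 + x3^+2 + x4^+2 + x5^+2 + x6^+2 + x7^+2)); first ring.
by rewrite h mul1r.
Qed.

Lemma reach_R1 c s x0 x1 x2 x3 x4 x5 x6 x7 : c^+2 + s^+2 = 1 ->
  reach 0 (mk8 x0 x1 x2 x3 x4 x5 x6 x7)
   (mk8 (c*x0 + s*x2) (c*x1+s*x3) (-s*x0+c*x2) (-s*x1+c*x3) (c*x4+s*x6) (c*x5+s*x7) (-s*x4+c*x6) (-s*x5+c*x7)).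
Proof.
move=> h; rewrite -G1E; apply: (@reach_gate (GLocal 1%:M (mx2 c s (-s) c) 1%:M)).
  by split; [exact: orth1|exact: orth_rot|exact: orth1].
rewrite /= G1E !nrm_mk8.
transitivity ((c^+2 + s^+2) * (x0^+2 + x1^+2 + x2^+2 + x3^+2 + x4^+2 + x5^+2 + x6^+2 + x7^+2)); first ring.
by rewrite h mul1r.
Qed.

Lemma reach_R0 c s x0 x1 x2 x3 x4 x5 x6 x7 : c^+2 + s^+2 = 1 ->
  reach 0 (mk8 x0 x1 x2 x3 x4 x5 x6 x7)
   (mk8 (c*x0 + s*x1) (-s*x0+c*x1) (c*x2+s*x3) (-s*x2+c*x3) (c*x4+s*x5) (-s*x4+c*x5) (c*x6+s*x7) (-s*x6+c*x7)).
Proof.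
move=> h; rewrite -G0E; apply: (@reach_gate (GLocal 1%:M 1%:M (mx2 c s (-s) c))).
  by split; [exact: orth1|exact: orth1|exact: orth_rot].
rewrite /= G0E !nrm_mk8.
transitivity ((c^+2 + s^+2) * (x0^+2 + x1^+2 + x2^+2 + x3^+2 + x4^+2 + x5^+2 + x6^+2 + x7^+2)); first ring.
by rewrite h mul1r.
Qed.

Lemma reach_cz01 x0 x1 x2 x3 x4 x5 x6 x7 :
  reach 1 (mk8 x0 x1 x2 x3 x4 x5 x6 x7) (mk8 x0 x1 x2 (-x3) x4 x5 x6 (-x7)).
Proof.
rewrite -cz01E; apply: (@reach_gate (GCZ R (inord 0) (inord 1))).
  by rewrite /= inord_eqE.
by rewrite /= cz01E !nrm_mk8 !sqrrN.
Qed.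

Lemma reach_cz02 x0 x1 x2 x3 x4 x5 x6 x7 :
  reach 1 (mk8 x0 x1 x2 x3 x4 x5 x6 x7) (mk8 x0 x1 x2 x3 x4 (-x5) x6 (-x7)).
Proof.
rewrite -cz02E; apply: (@reach_gate (GCZ R (inord 0) (inord 2))).
  by rewrite /= inord_eqE.
by rewrite /= cz02E !nrm_mk8 !sqrrN.
Qed.

Lemma reach_cz12 x0 x1 x2 x3 x4 x5 x6 x7 :
  reach 1 (mk8 x0 x1 x2 x3 x4 x5 x6 x7) (mk8 x0 x1 x2 x3 x4 x5 (-x6) (-x7)).
Proof.
rewrite -cz12E; apply: (@reach_gate (GCZ R (inord 1) (inord 2))).
  by rewrite /= inord_eqE.
by rewrite /= cz12E !nrm_mk8 !sqrrN.
Qed.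


Definition rf1 (c s x y : R) := (c^+2 - s^+2)*x + 2*c*s*y.
Definition rf2 (c s x y : R) := 2*c*s*x + (s^+2 - c^+2)*y.

Lemma reach_CR01 c s x0 x1 x2 x3 x4 x5 x6 x7 : c^+2 + s^+2 = 1 ->
  reach 1 (mk8 x0 x1 x2 x3 x4 x5 x6 x7)
    (mk8 x0 x1 (rf1 c s x2 x3) (rf2 c s x2 x3) x4 x5 (rf1 c s x6 x7) (rf2 c s x6 x7)).
Proof.
move=> h; have h' : c^+2 + (-s)^+2 = 1 by rewrite sqrrN.
apply: reach_eq; first exact: (reach_trans (reach_R0 _ _ _ _ _ _ _ _ h) (reach_trans (reach_cz01 _ _ _ _ _ _ _ _) (reach_R0 _ _ _ _ _ _ _ _ h'))).
rewrite /rf1 /rf2; congr mk8; rs h.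
Qed.

Lemma reach_CR02 c s x0 x1 x2 x3 x4 x5 x6 x7 : c^+2 + s^+2 = 1 ->
  reach 1 (mk8 x0 x1 x2 x3 x4 x5 x6 x7)
    (mk8 x0 x1 x2 x3 (rf1 c s x4 x5) (rf2 c s x4 x5) (rf1 c s x6 x7) (rf2 c s x6 x7)).
Proof.
move=> h; have h' : c^+2 + (-s)^+2 = 1 by rewrite sqrrN.
apply: reach_eq; first exact: (reach_trans (reach_R0 _ _ _ _ _ _ _ _ h) (reach_trans (reach_cz02 _ _ _ _ _ _ _ _) (reach_R0 _ _ _ _ _ _ _ _ h'))).
rewrite /rf1 /rf2; congr mk8; rs h.
Qed.

Lemma reach_CR12 c s x0 x1 x2 x3 x4 x5 x6 x7 : c^+2 + s^+2 = 1 ->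
  reach 1 (mk8 x0 x1 x2 x3 x4 x5 x6 x7)
    (mk8 x0 x1 x2 x3 (rf1 c s x4 x6) (rf1 c s x5 x7) (rf2 c s x4 x6) (rf2 c s x5 x7)).
Proof.
move=> h; have h' : c^+2 + (-s)^+2 = 1 by rewrite sqrrN.
apply: reach_eq; first exact: (reach_trans (reach_R1 _ _ _ _ _ _ _ _ h) (reach_trans (reach_cz12 _ _ _ _ _ _ _ _) (reach_R1 _ _ _ _ _ _ _ _ h'))).
rewrite /rf1 /rf2; congr mk8; rs h.
Qed.


Lemma stageBC u0 u1 u2 u3 u4 u5 u6 u7 : u0 * u3 - u1 * u2 = 0 ->
  exists t0 t4 t5 t6 t7, reach 0 (mk8 u0 u1 u2 u3 u4 u5 u6 u7) (mk8 t0 0 0 0 t4 t5 t6 t7).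
Proof.
move=> hd; have [c [s [h hu2 hu3]]] := stepB hd.
have r := reach_R1 u0 u1 u2 u3 u4 u5 u6 u7 h.
have [c' [s' [h' _ e2]]] := align (c*u0 + s*u2) (c*u1+s*u3).
have := reach_trans r (reach_R0 _ _ _ _ _ _ _ _ h').
rewrite hu2 hu3 e2 !mulr0 !addr0 => r2.
by do 5 eexists; exact: r2.
Qed.

Lemma rf2_e0 c s x y : rf2 c s x y = - E c s x y 1 0.
Proof. by rewrite /E /cross /rf2; ring. Qed.

Lemma stageD t0 t4 t5 t6 t7 :
  exists m p q, reach 2 (mk8 t0 0 0 0 t4 t5 t6 t7) (mk8 m 0 0 0 p 0 q 0).
Proof.
have h10 : (1 : R)^+2 + 0^+2 = 1 by rewrite expr1n expr0n addr0.
have [cP [sP [hP eP]]] := reflector t4 t5 h10.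
have eP' : rf2 cP sP t4 t5 = 0 by rewrite rf2_e0 eP oppr0.
set f1 := rf1 cP sP 1 0; set f2 := rf2 cP sP 1 0.
have hf : f1^+2 + f2^+2 = 1.
  transitivity ((cP^+2 + sP^+2)^+2); first by rewrite /f1 /f2 /rf1 /rf2; ring.
  by rewrite hP expr1n.
have [cQ [sQ [hQ eQ]]] := reflector t6 t7 hf.
have r := reach_trans (reach_CR01 t0 0 0 0 t4 t5 t6 t7 hQ) (reach_CR02 _ _ _ _ _ _ _ _ hP).
have z1 : rf1 cQ sQ 0 0 = 0 by rewrite /rf1; ring.
have z2 : rf2 cQ sQ 0 0 = 0 by rewrite /rf2; ring.
have z3 : rf2 cP sP (rf1 cQ sQ t6 t7) (rf2 cQ sQ t6 t7) = E cQ sQ t6 t7 f1 f2.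
  by rewrite /E /cross /f1 /f2 /rf1 /rf2; ring.
move: r; rewrite z1 z2 eP' z3 eQ => r.
by do 3 eexists; exact: r.
Qed.

Lemma stageE m p q : m^+2 + p^+2 + q^+2 = 1 ->
  reach 1 (mk8 m 0 0 0 p 0 q 0) (mk8 1 0 0 0 0 0 0 0).
Proof.
move=> hn.
have h10 : (1 : R)^+2 + 0^+2 = 1 by rewrite expr1n expr0n addr0.
have [cR [sR [hR eR]]] := reflector p q h10.
have eR' : rf2 cR sR p q = 0 by rewrite rf2_e0 eR oppr0.
have r := reach_CR12 m 0 0 0 p 0 q 0 hR.
have z1 : rf1 cR sR 0 0 = 0 by rewrite /rf1; ring.
have z2 : rf2 cR sR 0 0 = 0 by rewrite /rf2; ring.
move: r; rewrite z1 z2 eR' => r.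
set g := rf1 cR sR p q in r.
have [c [s [h e1 e2]]] := align m g.
have r2 := reach_trans r (reach_R2 _ _ _ _ _ _ _ _ h).
move: r2; rewrite e1 e2 !mulr0 !addr0 => r2.
have hg : m^+2 + g^+2 = 1.
  have := r2.1; rewrite !nrm_mk8 sq_sqrt !expr0n /= !addr0 hn; by [].
by move: r2; rewrite hg sqrtr1.
Qed.

Lemma key a0 a1 a2 a3 a4 a5 a6 a7 :
  nrm (mk8 a0 a1 a2 a3 a4 a5 a6 a7) = 1 ->
  0 <= (a0 * a7 - a1 * a6 - a2 * a5 + a3 * a4) ^+ 2
       - 4 * (a1 * a2 - a0 * a3) * (a5 * a6 - a4 * a7) ->
  reach 3 (mk8 a0 a1 a2 a3 a4 a5 a6 a7) (mk8 1 0 0 0 0 0 0 0).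
Proof.
move=> hn hD.
have [c [s [h hdet]]] := stepA hD.
have rA := reach_R2 a0 a1 a2 a3 a4 a5 a6 a7 h.
have [t0 [t4 [t5 [t6 [t7 rB]]]]] := @stageBC _ _ _ _ (-s*a0+c*a4) (-s*a1+c*a5) (-s*a2+c*a6) (-s*a3+c*a7) hdet.
have [m [p [q rD]]] := stageD t0 t4 t5 t6 t7.
have rAD := reach_trans rA (reach_trans rB rD).
have hn' : m^+2 + p^+2 + q^+2 = 1.
  by have := rAD.1; rewrite hn !nrm_mk8 !expr0n /= !addr0.
exact: (reach_trans rAD (stageE hn')).
Qed.

End M.

Lemma phi_mk8 (R : realType) (phi : 'cV[R]_8) :
  phi = mk8 (amp phi 0) (amp phi 1) (amp phi 2) (amp phi 3) (amp phi 4) (amp phi 5) (amp phi 6) (amp phi 7).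
Proof.
apply/matrixP => i j; rewrite ord1 (ord8 i) (mk8E _ _ _ _ _ _ _ _ (ltn_ord i)).
rewrite /amp; case: i => [[|[|[|[|[|[|[|[|//]]]]]]]] Hi] //=; by rewrite !inordK.
Qed.

Lemma ket000_mk8 (R : realType) : ket000 = mk8 1 0 0 0 0 0 0 (0 : R).
Proof.
apply/matrixP => i j; rewrite ord1 (ord8 i) (mk8E _ _ _ _ _ _ _ _ (ltn_ord i)).
rewrite mxE; case: i => [[|[|[|[|[|[|[|[|//]]]]]]]] Hi] //=;
  by rewrite -(inj_eq val_inj) /= inordK.
Qed.

Unset Implicit Arguments.

Theorem mainTheorem1 (R : realType) (phi : 'cV[R]_8) :
  \sum_(k < 8) phi k 0 ^+ 2 = 1 ->
  (exists c : seq (gate R),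
      circuit_ok c /\ (num_cz c <= 4)%N /\ circuit_mx c *m phi = ket000) /\
  (0 <= Delta phi ->
   exists c : seq (gate R),
      circuit_ok c /\ (num_cz c <= 3)%N /\ circuit_mx c *m phi = ket000).
Proof.
move=> hn0; rewrite /Delta ket000_mk8.
set a0 := amp phi 0; set a1 := amp phi 1; set a2 := amp phi 2; set a3 := amp phi 3.
set a4 := amp phi 4; set a5 := amp phi 5; set a6 := amp phi 6; set a7 := amp phi 7.
have ephi : phi = mk8 a0 a1 a2 a3 a4 a5 a6 a7 := phi_mk8 phi.
have hn : nrm (mk8 a0 a1 a2 a3 a4 a5 a6 a7) = 1 by rewrite -ephi.
rewrite ephi.
have part2 : 0 <= (a0 * a7 - a1 * a6 - a2 * a5 + a3 * a4) ^+ 2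
       - 4 * (a1 * a2 - a0 * a3) * (a5 * a6 - a4 * a7) ->
   exists c : seq (gate R),
      circuit_ok c /\ (num_cz c <= 3)%N /\ circuit_mx c *m mk8 a0 a1 a2 a3 a4 a5 a6 a7 = mk8 1 0 0 0 0 0 0 0.
  by move=> hD; have [_ h] := key hn hD.
split; last exact: part2.
case: (lerP 0 ((a0 * a7 - a1 * a6 - a2 * a5 + a3 * a4) ^+ 2
       - 4 * (a1 * a2 - a0 * a3) * (a5 * a6 - a4 * a7))) => hD.
  have [c [h1 [h2 h3]]] := part2 hD; exists c; split => //; split => //.
  exact: (leq_trans h2).
have r1 := reach_cz12 a0 a1 a2 a3 a4 a5 a6 a7.
have hn' : nrm (mk8 a0 a1 a2 a3 a4 a5 (-a6) (-a7)) = 1 by rewrite r1.1.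
have hD' : 0 <= (a0 * (-a7) - a1 * (-a6) - a2 * a5 + a3 * a4) ^+ 2
       - 4 * (a1 * a2 - a0 * a3) * (a5 * (-a6) - a4 * (-a7)).
  set b' := (a0 * (-a7) - a1 * (-a6) - a2 * a5 + a3 * a4).
  set P := 4 * (a1 * a2 - a0 * a3) * (a5 * a6 - a4 * a7).
  have -> : 4 * (a1 * a2 - a0 * a3) * (a5 * (-a6) - a4 * (-a7)) = - P by rewrite /P; ring.
  rewrite opprK; apply: addr_ge0; first exact: sqr_ge0.
  rewrite -/P in hD; apply: ltW; apply: (le_lt_trans (sqr_ge0 (a0 * a7 - a1 * a6 - a2 * a5 + a3 * a4))).
  by rewrite -subr_lt0.
have [_ [c [h1 [h2 h3]]]] := reach_trans r1 (key hn' hD').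
by exists c.
Qed.
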